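(* Let $X$ be a compact metric space, $f\colon X\to X$ continuous, and $\bar x=(x_i)_{i\in\mathbb Z}$ a full orbit. For $k\in\mathbb N$ write $D_k=\overline{\{x_l: l\in\mathbb Z,\ k\nmid l\}}$. Then $$\mathrm{Per}(\bar x)=\{k\in\mathbb N:\exists N_0\in\mathbb N\ \text{with}\ x_{-N_0k}\notin D_k\},$$ $$\mathrm{Per}(\bar x)=\{k\in\mathbb N:\exists N_0\in\mathbb N\ \forall N\ge N_0\ \ x_{-Nk}\notin D_k\},$$ and $$\mathrm{Per}(\bar x)=\bigcup_{N=0}^{\infty}\{k\in\mathbb N: x_{-Nk}\notin D_k\}.$$
   Context: A full orbit is a sequence $\bar x=(x_i)_{i\in\mathbb Z}$ in $X$ with $f(x_i)=x_{i+1}$ for all $i$. $2^X$ is the space of nonempty closed subsets of $X$ with the Hausdorff metric, $2^f(C)=f(C)$. $\mathrm{Per}(\bar x)$ is the set of $k\in\mathbb N$ such that $\overline{\{x_{mk}:m\in\mathbb Z\}}$ is a periodic point of $2^f$ with fundamental period $k$. *)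

(* Defs.v *)
From HB Require Import structures.
From mathcomp Require Import all_boot all_order all_algebra.
From mathcomp Require Import all_classical all_reals all_analysis.
Set Implicit Arguments. Unset Strict Implicit. Unset Printing Implicit Defensive.
Import Order.TTheory GRing.Theory Num.Theory.
Local Open Scope classical_set_scope.
Local Open Scope ring_scope.

Definition full_orbit (X : Type) (f : X -> X) (x : int -> X) : Prop :=
  forall i : int, f (x i) = x (i + 1).

Definition hyper_map (X : Type) (f : X -> X) (C : set X) : set X := f @` C.

Definition hyper_periodic_fund (X : Type) (f : X -> X) (C : set X) (k : nat) : Prop :=
  (0 < k)%N /\ iter k (hyper_map f) C = C /\
  (forall j : nat, (0 < j)%N -> (j < k)%N -> iter j (hyper_map f) C <> C).

Definition orbit_sub_closure (X : topologicalType) (x : int -> X) (k : nat) : set X :=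
  closure [set x (m * (k%:Z)) | m in [set: int]].

Definition Per (X : topologicalType) (f : X -> X) (x : int -> X) : set nat :=
  [set k : nat | hyper_periodic_fund f (orbit_sub_closure x k) k].

Definition Dk (X : topologicalType) (x : int -> X) (k : nat) : set X :=
  closure [set x l | l in [set l : int | ~~ ((k%:Z) %| l)%Z]].

(* Main.v *)
Require Import Defs.
From HB Require Import structures.
From mathcomp Require Import all_boot all_order all_algebra.
From mathcomp Require Import all_classical all_reals all_analysis.
From mathcomp Require Import zify ring lra.
Set Implicit Arguments. Unset Strict Implicit.
Import Order.TTheory GRing.Theory Num.Theory.
Local Open Scope classical_set_scope.
Local Open Scope ring_scope.

Lemma ndvd_aux (k j : nat) (m : int) : (0 < j)%N -> (j < k)%N ->
  ~~ (k%:Z %| m * k%:Z + j%:Z)%Z.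
Proof.
move=> j0 jk; apply/negP => /dvdzP [q hq].
have : j%:Z = (q - m) * k%:Z by rewrite mulrBl -hq; ring.
case: (ltP 0 (q - m)) => h e.
  have : (q - m) * k%:Z >= k%:Z by nia.
  lia.
have : (q - m) * k%:Z <= 0 by nia.
lia.
Qed.

Lemma ndvd_shift (k c : nat) (l : int) : ~~ (k%:Z %| l)%Z ->
  ~~ (k%:Z %| l + (c * k)%N%:Z)%Z.
Proof.
move=> h; apply/negP => /dvdzP [q hq]; move/negP: h; apply.
apply/dvdzP; exists (q - c%:Z).
rewrite mulrBl -hq PoszM; ring.
Qed.

Lemma pigeon (P : nat -> nat -> Prop) (n : nat) :
  (forall N, exists j, (j < n)%N /\ P j N) ->
  exists j, (j < n)%N /\ forall N, exists N', (N <= N')%N /\ P j N'.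
Proof.
elim: n P => [|n IH] P H.
  by case: (H 0%N) => j [].
have [inf|fin] := pselect (forall N, exists N', (N <= N')%N /\ P n N').
  by exists n; split.
have [M hM] : exists M, forall N', (M <= N')%N -> ~ P n N'.
  apply: contrapT => hc; apply: fin => N.
  apply: contrapT => hc2; apply: hc; exists N => N' hN' hP.
  by apply: hc2; exists N'.
have [j [jn hj]] : exists j, (j < n)%N /\ forall N, exists N', (N <= N')%N /\ P j (N' + M)%N.
  apply: (IH (fun j N => P j (N + M)%N)) => N.
  case: (H (N + M)%N) => j [jn hj].
  have jn' : j != n by apply/eqP => e; subst j; apply: (hM (N + M)%N) => //; lia.
  exists j; split => //; lia.
exists j; split; first lia.
move=> N; case: (hj N) => N' [h1 h2]; exists (N' + M)%N; split => //; lia.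
Qed.

Lemma closed_fin (T : topologicalType) (C : nat -> set T) (n : nat) :
  (forall j, closed (C j)) -> closed [set y | exists j, (j < n)%N /\ C j y].
Proof.
move=> hC; elim: n => [|n IH].
  have -> : [set y | exists j, (j < 0)%N /\ C j y] = set0.
    by apply/seteqP; split => y // [j []].
  exact: closed0.
have -> : [set y | exists j, (j < n.+1)%N /\ C j y] =
   [set y | exists j, (j < n)%N /\ C j y] `|` C n.
  apply/seteqP; split => y.
    move=> [j [jn hj]]; have [e|ne] := eqVneq j n; first by right; rewrite -e.
    by left; exists j; split => //; lia.
  by case=> [[j [jn hj]]|h]; [exists j; split => //; lia | exists n; split].
exact: closedU.
Qed.

Lemma img_closure (R : realType) (X : metricType R) (h : X -> X) (S : set X) :
  compact [set: X] -> continuous h -> h @` closure S = closure (h @` S).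
Proof.
move=> cX ch; apply/seteqP; split.
  have : closure S `<=` h @^-1` closure (h @` S).
    have cl : closed (h @^-1` closure (h @` S)).
      by apply: preimage_closed; [move=> ? ?; exact: ch | exact: closed_closure].
    rewrite ((closure_id _).1 cl); apply: closureS => y Sy.
    by apply: subset_closure; exists y.
  by move=> sub y [z /sub hz <-].
have cmp : compact (h @` closure S).
  apply: (continuous_compact (continuous_subspaceT ch)).
  apply: (subclosed_compact _ cX) => //; exact: closed_closure.
have cl := compact_closed (@metric_hausdorff R X) cmp.
rewrite [Y in _ `<=` Y]((closure_id _).1 cl); apply: closureS.
by move=> y [z Sz <-]; exists z => //; apply: subset_closure.
Qed.

Lemma iter_orbit (X : Type) (f : X -> X) (x : int -> X) (n : nat) (i : int) :
  full_orbit f x -> iter n f (x i) = x (i + n%:Z).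
Proof.
move=> fo; elim: n => [|n IH]; first by rewrite addr0.
by rewrite iterS IH fo; congr x; lia.
Qed.

Definition Bs (X : topologicalType) (x : int -> X) (k n : nat) : set X :=
  closure [set x (m * k%:Z + n%:Z) | m in [set: int]].
Arguments Bs {X}.

Lemma Bs_succ (R : realType) (X : metricType R) (f : X -> X) (x : int -> X) (k n : nat) :
  compact [set: X] -> continuous f -> full_orbit f x ->
  f @` Bs x k n = Bs x k n.+1.
Proof.
move=> cX cf fo; rewrite /Bs img_closure //; congr closure.
apply/seteqP; split => y.
  by move=> [z [m _ <-] <-]; exists m => //; rewrite fo; congr x; lia.
move=> [m _ <-]; exists (x (m * k%:Z + n%:Z)); first by exists m.
by rewrite fo; congr x; lia.
Qed.

Lemma Bs_iter (R : realType) (X : metricType R) (f : X -> X) (x : int -> X) (k n i : nat) :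
  compact [set: X] -> continuous f -> full_orbit f x ->
  iter i (hyper_map f) (Bs x k n) = Bs x k (n + i).
Proof.
move=> cX cf fo; elim: i => [|i IH]; first by rewrite addn0.
by rewrite iterS IH /hyper_map (Bs_succ _ _ cX cf fo) addnS.
Qed.

Lemma Bs_per (X : topologicalType) (x : int -> X) (k n c : nat) :
  Bs x k (n + c * k) = Bs x k n.
Proof.
rewrite /Bs; congr closure; apply/seteqP; split => y [m _ <-].
  by exists (m + c%:Z) => //; congr x; lia.
by exists (m - c%:Z) => //; congr x; lia.
Qed.

Lemma osc_B0 (X : topologicalType) (x : int -> X) (k : nat) :
  orbit_sub_closure x k = Bs x k 0.
Proof.
rewrite /Bs /orbit_sub_closure; congr closure; apply/seteqP; split => y [m _ <-];
  by exists m => //; rewrite addr0.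
Qed.

Lemma Bs_pt (R : realType) (X : metricType R) (f : X -> X) (x : int -> X) (k n i : nat) p :
  compact [set: X] -> continuous f -> full_orbit f x ->
  Bs x k n p -> Bs x k (n + i) (iter i f p).
Proof.
move=> cX cf fo hp; elim: i => [|i IH]; first by rewrite addn0.
by rewrite iterS addnS -(Bs_succ _ _ cX cf fo); exists (iter i f p).
Qed.

Lemma iter_mono (X : Type) (f : X -> X) (A A' : set X) i :
  A `<=` A' -> iter i (hyper_map f) A `<=` iter i (hyper_map f) A'.
Proof.
move=> h; elim: i => [|i IH] //=.
exact: image_subset.
Qed.

Lemma Bs_sub_D (X : topologicalType) (x : int -> X) (k j : nat) :
  (0 < j)%N -> (j < k)%N -> Bs x k j `<=` Dk x k.
Proof.
move=> j0 jk; apply: closureS => y [m _ <-]; exists (m * k%:Z + j%:Z) => //.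
exact: ndvd_aux.
Qed.

Lemma D_sub_U (X : topologicalType) (x : int -> X) (k : nat) :
  (0 < k)%N -> Dk x k `<=` [set y | exists j, (j < k.-1)%N /\ Bs x k j.+1 y].
Proof.
move=> k0.
have cl : closed [set y | exists j, (j < k.-1)%N /\ Bs x k j.+1 y].
  apply: closed_fin => j; exact: closed_closure.
rewrite ((closure_id _).1 cl); apply: closureS => y [l /= hl <-].
have kz : k%:Z != 0 by lia.
have r0 := modz_ge0 l kz.
have r1 : (l %% k%:Z < k%:Z)%Z by apply: ltz_pmod; lia.
have rn0 : (l %% k%:Z)%Z != 0.
  by apply/negP => /eqP e; move/negP: hl; apply; apply/dvdz_mod0P.
exists (`|(l %% k%:Z)%Z|%N.-1); split; first lia.
apply: subset_closure; exists (l %/ k%:Z)%Z => //.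
rewrite {3}(divz_eq l k%:Z); congr x; congr (_ + _); lia.
Qed.

Lemma D_inv (R : realType) (X : metricType R) (f : X -> X) (x : int -> X) (k c : nat) p :
  compact [set: X] -> continuous f -> full_orbit f x ->
  Dk x k p -> Dk x k (iter (c * k) f p).
Proof.
move=> cX cf fo hp.
have ci : continuous (iter (c * k) f).
  elim: (c * k)%N => [|i IH] /=; first by move=> z; exact: cvg_id.
  move=> z; exact: (@continuous_comp _ _ _ (iter i f) f z (IH z) (cf _)).
have : ((iter (c * k) f) @` Dk x k) (iter (c * k) f p) by exists p.
rewrite /Dk img_closure //; apply: closureS => y [z [l hl <-] <-].
exists (l + (c * k)%N%:Z); last by rewrite iter_orbit.
exact: ndvd_shift.
Qed.

Lemma char1 (R : realType) (X : metricType R) (f : X -> X) (x : int -> X) (k : nat) :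
  compact [set: X] -> continuous f -> full_orbit f x -> (0 < k)%N ->
  (Per f x k <-> exists N : nat, ~ Dk x k (x (- (N%:Z * k%:Z)))).
Proof.
move=> cX cf fo k0.
have itB : forall i, iter i (hyper_map f) (orbit_sub_closure x k) = Bs x k i.
  by move=> i; rewrite osc_B0 (Bs_iter _ _ _ cX cf fo).
split; last first.
  move=> [N hN]; split => //; split.
    by rewrite itB osc_B0 -(Bs_per x k 0 1) mul1n.
  move=> j j0 jk; rewrite itB osc_B0 => e; apply: hN.
  apply: (Bs_sub_D j0 jk); rewrite e; apply: subset_closure.
  by exists (- N%:Z) => //; congr x; lia.
move=> [_ [_ hfund]]; apply: contrapT => hc.
have hall : forall N : nat, exists j, (j < k.-1)%N /\ Bs x k j.+1 (x (- (N%:Z * k%:Z))).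
  move=> N; apply: (D_sub_U k0); apply: contrapT => h; apply: hc; by exists N.
have [j [jk hj]] := pigeon hall.
set j0 := j.+1.
have sub0 : Bs x k 0 `<=` Bs x k j0.
  rewrite [Y in _ `<=` Y]((closure_id _).1 (@closed_closure _ _)).
  apply: closureS => y [m _ <-].
  have [N' [hN' hP]] := hj `|m|%N.
  have := @Bs_pt _ _ f x k j.+1 (`|(N'%:Z + m)%R|%N * k)%N _ cX cf fo hP.
  rewrite Bs_per iter_orbit // => H.
  suff -> : x (m * k%:Z + 0%:Z) = x (- (N'%:Z * k%:Z) + ((`|(N'%:Z+m)%R|%N * k)%N)%:Z) by [].
  congr x; nia.
have step : forall i, Bs x k i `<=` Bs x k (i + j0).
  move=> i; have := @iter_mono _ f _ _ i sub0.
  by rewrite !(Bs_iter _ _ _ cX cf fo) add0n addnC.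
have chain : forall c, Bs x k j0 `<=` Bs x k (j0 + c * j0).
  elim => [|c IH]; first by rewrite mul0n addn0.
  apply: (subset_trans IH).
  have -> : (j0 + c.+1 * j0 = (j0 + c * j0) + j0)%N by lia.
  exact: step.
have e2 : (j0 + (k.-1) * j0 = 0 + j0 * k)%N by rewrite /j0; nia.
have eqB : Bs x k j0 = Bs x k 0.
  apply/seteqP; split => //; have := chain k.-1; by rewrite e2 Bs_per.
apply: (hfund j0); first by [].
  rewrite /j0; lia.
by rewrite itB osc_B0 eqB.
Qed.

Unset Implicit Arguments. Set Strict Implicit.

Theorem lemma4p6 (R : realType) (X : metricType R) (f : X -> X)
  (x : int -> X) :
  compact [set: X] -> continuous f -> full_orbit f x ->
  Per f x = [set k : nat | (0 < k)%N /\
              exists N0 : nat, ~ Dk x k (x (- (N0%:Z * k%:Z))) ] /\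
  Per f x = [set k : nat | (0 < k)%N /\
              exists N0 : nat, forall N : nat, (N0 <= N)%N ->
                ~ Dk x k (x (- (N%:Z * k%:Z))) ] /\
  Per f x = \bigcup_(N in [set: nat])
              [set k : nat | (0 < k)%N /\ ~ Dk x k (x (- (N%:Z * k%:Z))) ].
Proof.
move=> cX cf fo.
have E1 : Per f x = [set k : nat | (0 < k)%N /\
              exists N0 : nat, ~ Dk x k (x (- (N0%:Z * k%:Z))) ].
  apply/seteqP; split => k /=.
    move=> hk; have k0 : (0 < k)%N by case: hk.
    by split => //; apply/(char1 cX cf fo k0).
  by move=> [k0 hN]; apply/(char1 cX cf fo k0).
split => //; split.
  rewrite E1; apply/seteqP; split => k /= [k0 [N0 hN]]; split => //.
    exists N0 => N hN0 hD; apply: hN.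
    have := @D_inv _ _ f x k (N - N0)%N _ cX cf fo hD.
    rewrite iter_orbit //; congr Dk; congr x; nia.
  by exists N0; apply: hN.
rewrite E1; apply/seteqP; split => k /=.
  by move=> [k0 [N0 hN]]; exists N0.
by move=> [N0 _ [k0 hN]]; split => //; exists N0.
Qed.
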